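(* For all integers $n \geq k \geq 1$ and $1 \leq m < n$, under any bi-partition of the input positions between Alice and Bob, $D(\operatorname{SSD}_{n,k,m}) = O(k \log n)$.
   Context: For $\Sigma = \{0,1,\dots,m\}$, $\operatorname{SSD}_{n,k,m} : \Sigma^n \times \Sigma^k \to \{0,1\}$ is $1$ iff $y$ is a subsequence of $x$ (there exist indices $i_1 < \dots < i_k$ with $x_{i_j} = y_j$). A bi-partition assigns each of the $n+k$ characters of $(x,y)$ to Alice or Bob. $D(f)$ is the minimum worst-case number of bits exchanged by a deterministic two-party protocol computing $f$. *)

(* Defs.v *)
From mathcomp Require Import all_boot.
Set Implicit Arguments. Unset Strict Implicit. Unset Printing Implicit Defensive.

(* Alphabet Sigma = {0,...,m} is 'I_m.+1. Input (x,y) with x in Sigma^n, y in Sigma^k. *)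
Definition input (n k m : nat) : Type :=
  (('I_n -> 'I_m.+1) * ('I_k -> 'I_m.+1))%type.

Definition position (n k : nat) : Type := ('I_n + 'I_k)%type.

Definition char_at n k m (z : input n k m) (p : position n k) : 'I_m.+1 :=
  match p with inl i => z.1 i | inr j => z.2 j end.

Definition SSD n k m (z : input n k m) : Prop :=
  exists idx : 'I_k -> 'I_n,
    (forall j1 j2 : 'I_k, j1 < j2 -> idx j1 < idx j2) /\
    (forall j : 'I_k, z.1 (idx j) = z.2 j).

(* A bi-partition: owner p = true means position p is given to Alice,
   false means Bob. *)
Definition bipartition (n k : nat) : Type := position n k -> bool.

(* At an internal node
   [Node a f l r] the player a (true = Alice, false = Bob) sends the bit
   f z; the protocol continues in r if the bit is true, in l otherwise. *)
Inductive protocol (T : Type) : Type :=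
| Leaf of bool
| Node of bool & (T -> bool) & protocol T & protocol T.

Fixpoint run T (P : protocol T) (z : T) : bool :=
  match P with
  | Leaf b => b
  | Node _ f l r => if f z then run r z else run l z
  end.

(* Number of bits exchanged in the worst case = depth of the tree. *)
Fixpoint depth T (P : protocol T) : nat :=
  match P with
  | Leaf _ => 0
  | Node _ _ l r => (maxn (depth l) (depth r)).+1
  end.

Definition same_view n k m (own : bipartition n k) (a : bool) (z z' : input n k m) : Prop :=
  forall p : position n k, own p = a -> char_at z p = char_at z' p.

(* Each message depends only on the sender's own part of the input
   (the history is encoded by the position in the tree). *)
Fixpoint valid n k m (own : bipartition n k) (P : protocol (input n k m)) : Prop :=
  match P with
  | Leaf _ => True
  | Node a f l r =>
      (forall z z', same_view own a z z' -> f z = f z') /\ valid own l /\ valid own r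
  end.

Definition computes n k m (P : protocol (input n k m)) (F : input n k m -> Prop) : Prop :=
  forall z, run P z = true <-> F z.

Definition D_le n k m (own : bipartition n k) (F : input n k m -> Prop) (d : nat) : Prop :=
  exists P : protocol (input n k m), valid own P /\ computes P F /\ depth P <= d.

(* Main.v *)
Require Import Defs.
From mathcomp Require Import all_boot zify.
Set Implicit Arguments. Unset Strict Implicit. Unset Printing Implicit Defensive.

Fixpoint sendAux (T : Type) (b : nat) (a : bool) (g : T -> nat)
  (cont : nat -> protocol T) : protocol T :=
  match b with
  | 0 => cont 0
  | b'.+1 => Node a (fun z => odd (g z))
      (sendAux b' a (fun z => (g z)./2) (fun v => cont v.*2))
      (sendAux b' a (fun z => (g z)./2) (fun v => cont v.*2.+1))
  end.
Arguments sendAux {T}.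

Lemma run_sendAux T b a g cont (z : T) : g z < 2 ^ b ->
  run (sendAux b a g cont) z = run (cont (g z)) z.
Proof.
elim: b g cont => [|b IH] g cont /=.
  by rewrite expn0 ltnS leqn0 => /eqP ->.
move=> lt.
have lt2 : (g z)./2 < 2 ^ b.
  by rewrite ltn_half_double -mul2n -expnS.
case: ifP => od; rewrite IH //; congr run; congr cont;
  by rewrite -[RHS]odd_double_half od.
Qed.

Lemma depth_sendAux T b a g cont d :
  (forall v, depth (cont v) <= d) -> depth (@sendAux T b a g cont) <= b + d.
Proof.
elim: b g cont => [|b IH] g cont H /=; first exact: H.
by rewrite addSn ltnS geq_max !IH.
Qed.

Fixpoint first (P : nat -> bool) (p c : nat) : nat :=
  match c with
  | 0 => p
  | c'.+1 => if P p then p else first P p.+1 c'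
  end.

Lemma first_le (P : nat -> bool) p c : p <= first P p c <= p + c.
Proof.
elim: c p => [|c IH] p /=; first by rewrite addn0 leqnn.
case: (P p); first by rewrite leqnn leq_addr.
by move: (IH p.+1) => /andP [h1 h2]; apply/andP; split; lia.
Qed.

Lemma first_P (P : nat -> bool) p c : first P p c < p + c -> P (first P p c).
Proof.
elim: c p => [|c IH] p /=; first by rewrite addn0 ltnn.
case: ifP => // _ h; apply: IH; lia.
Qed.

Lemma first_min (P : nat -> bool) p c i : p <= i < first P p c -> ~~ P i.
Proof.
elim: c p => [|c IH] p /=; first by lia.
case: ifP => Pp; first by lia.
move=> h; have [->|ne] := eqVneq i p; first by rewrite Pp.
apply: (IH p.+1); lia.
Qed.

Lemma first_leq (P : nat -> bool) p c i : p <= i < p + c -> P i -> first P p c <= i.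
Proof.
move=> h Pi; rewrite leqNgt; apply/negP => lt.
have H : p <= i < first P p c by lia.
by have := @first_min P p c i H; rewrite Pi.
Qed.

Lemma eq_first (P P' : nat -> bool) p c : P =1 P' -> first P p c = first P' p c.
Proof. move=> e; elim: c p => [|c IH] p //=; by rewrite e IH. Qed.

Lemma first_split (A Q : nat -> bool) p c :
  minn (first (fun i => A i && Q i) p c) (first (fun i => ~~ A i && Q i) p c)
  = first Q p c.
Proof.
elim: c p => [|c IH] p /=; first by rewrite minnn.
case: (Q p); case: (A p) => /=.
- by move: (first_le (fun i => ~~ A i && Q i) p.+1 c); lia.
- by move: (first_le (fun i => A i && Q i) p.+1 c); lia.
- exact: IH.
- exact: IH.
Qed.

Definition Xn n k m (z : input n k m) (i : nat) : nat :=
  if (insub i : option 'I_n) is Some i' then val (z.1 i') else 0.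
Definition Yn n k m (z : input n k m) (j : nat) : nat :=
  if (insub j : option 'I_k) is Some j' then val (z.2 j') else 0.
Definition ownX n k (own : bipartition n k) (i : nat) : bool :=
  if (insub i : option 'I_n) is Some i' then own (inl i') else true.
Definition ownY n k (own : bipartition n k) (j : nat) : bool :=
  if (insub j : option 'I_k) is Some j' then own (inr j') else true.

Lemma Xn_val n k m (z : input n k m) (i : 'I_n) : Xn z i = z.1 i.
Proof. by rewrite /Xn valK. Qed.
Lemma Yn_val n k m (z : input n k m) (j : 'I_k) : Yn z j = z.2 j.
Proof. by rewrite /Yn valK. Qed.

Lemma Yn_lt n k m (z : input n k m) j : Yn z j < m.+1.
Proof. rewrite /Yn; case: insub => // j'; exact: ltn_ord. Qed.

Lemma view_Y n k m (own : bipartition n k) (z z' : input n k m) j :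
  same_view own (ownY own j) z z' -> Yn z j = Yn z' j.
Proof.
rewrite /Yn /ownY; case: insub => // j' h.
by have /= -> := h (inr j') erefl.
Qed.

Lemma view_X n k m (own : bipartition n k) (z z' : input n k m) a c i :
  same_view own a z z' ->
  ((ownX own i == a) && (Xn z i == c)) = ((ownX own i == a) && (Xn z' i == c)).
Proof.
rewrite /Xn /ownX; case: insub => // i' h.
case: eqP => // e; by have /= -> := h (inl i') e.
Qed.

Fixpoint gr n k m (z : input n k m) (p j r : nat) : bool :=
  match r with
  | 0 => true
  | r'.+1 =>
    let q := first (fun i => Xn z i == Yn z j) p (n - p) in
    if q < n then gr z q.+1 j.+1 r' else false
  end.

Fixpoint proto n k m (own : bipartition n k) (L p j r : nat) : protocol (input n k m) :=
  match r with
  | 0 => Leaf _ true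
  | r'.+1 =>
    sendAux L (ownY own j) (fun z => Yn z j) (fun c =>
    sendAux L true (fun z => first (fun i => (ownX own i == true) && (Xn z i == c)) p (n - p)) (fun a =>
    sendAux L false (fun z => first (fun i => (ownX own i == false) && (Xn z i == c)) p (n - p)) (fun b =>
    if minn a b < n then @proto n k m own L (minn a b).+1 j.+1 r' else Leaf _ false)))
  end.

Lemma valid_sendAux n k m (own : bipartition n k) b a g cont :
  (forall z z', same_view own a z z' -> g z = g z') ->
  (forall v, valid own (cont v)) -> valid own (@sendAux (input n k m) b a g cont).
Proof.
elim: b g cont => [|b IH] g cont hg hc //=.
split; first by move=> z z' /hg ->.
by split; apply: IH => // z z' /hg ->.
Qed.

Lemma valid_proto n k m (own : bipartition n k) L p j r :
  valid own (@proto n k m own L p j r).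
Proof.
elim: r p j => [|r IH] p j //=.
apply: valid_sendAux; first by move=> z z' h; apply: (view_Y h).
move=> c; apply: valid_sendAux.
  by move=> z z' h; apply: eq_first => i; apply: view_X.
move=> a; apply: valid_sendAux.
  by move=> z z' h; apply: eq_first => i; apply: view_X.
by move=> b; case: ifP.
Qed.

Lemma depth_proto n k m (own : bipartition n k) L p j r :
  depth (@proto n k m own L p j r) <= r * (3 * L).
Proof.
elim: r p j => [|r IH] p j //=.
have -> : r.+1 * (3 * L) = L + (L + (L + r * (3 * L))) by lia.
apply: depth_sendAux => c; apply: depth_sendAux => a; apply: depth_sendAux => b.
by case: ifP.
Qed.

Lemma run_proto n k m (own : bipartition n k) L p j r (z : input n k m) :
  m < n -> n < 2 ^ L -> p <= n -> run (@proto n k m own L p j r) z = gr z p j r.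
Proof.
move=> mn nL.
elim: r p j => [|r IH] p j pn //=.
rewrite run_sendAux; last by have := Yn_lt z j; lia.
rewrite run_sendAux; last by have := first_le (fun i => (ownX own i == true) && (Xn z i == Yn z j)) p (n - p); lia.
rewrite run_sendAux; last by have := first_le (fun i => (ownX own i == false) && (Xn z i == Yn z j)) p (n - p); lia.
have -> : (first (fun i => (ownX own i == true) && (Xn z i == Yn z j)) p (n - p)) =
          (first (fun i => ownX own i && (Xn z i == Yn z j)) p (n - p)).
  by apply: eq_first => i; case: ownX.
have -> : (first (fun i => (ownX own i == false) && (Xn z i == Yn z j)) p (n - p)) =
          (first (fun i => ~~ ownX own i && (Xn z i == Yn z j)) p (n - p)).
  by apply: eq_first => i; case: ownX.
rewrite first_split.
case: ifP => // h; apply: IH; lia.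
Qed.

Definition spec n k m (z : input n k m) p j r : Prop :=
  exists f : nat -> nat,
    (forall t, j <= t < j + r -> p <= f t < n /\ Xn z (f t) = Yn z t) /\
    (forall t1 t2, j <= t1 -> t1 < t2 -> t2 < j + r -> f t1 < f t2).

Lemma gr_spec n k m (z : input n k m) p j r : gr z p j r <-> spec z p j r.
Proof.
elim: r p j => [|r IH] p j /=.
  split=> // _; exists (fun _ => 0); split=> t; lia.
set q := first _ p (n - p).
have qle := first_le (fun i => Xn z i == Yn z j) p (n - p).
split.
- case: ifP => // qn /IH [f [hf mf]].
  have Pq : Xn z q == Yn z j.
    by have := @first_P (fun i => Xn z i == Yn z j) p (n - p); rewrite -/q; apply; lia.
  exists (fun t => if t == j then q else f t); split.
  + move=> t ht; case: eqP => [->|ne]; first by rewrite (eqP Pq); split=> //; lia.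
    have := hf t; case; first by lia.
    move=> h1 h2; split=> //; lia.
  + move=> t1 t2 h1 h2 h3.
    case: eqP => e1; case: eqP => e2; try lia.
      have := hf t2; case; first by lia. lia.
    apply: mf; lia.
- move=> [f [hf mf]].
  have [h1 h2] := hf j ltac:(lia).
  have qf : q <= f j by apply: first_leq; [lia | apply/eqP].
  have -> : q < n by lia.
  apply/IH; exists f; split.
    move=> t ht; have [h3 h4] := hf t ltac:(lia); split=> //.
    have := mf j t; lia.
  move=> t1 t2 *; apply: mf; lia.
Qed.

Lemma insub_ord k t (tk : t < k) : (insub t : option 'I_k) = Some (Ordinal tk).
Proof.
case: insubP => [u _ e|]; last by rewrite tk.
by congr Some; apply: val_inj; rewrite e.
Qed.

Lemma SSD_spec n k m (z : input n k m) : SSD z <-> spec z 0 0 k.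
Proof.
split.
- move=> [idx [mi ei]].
  exists (fun t => if (insub t : option 'I_k) is Some t' then val (idx t') else 0).
  split.
  + move=> t ht.
    have tk : t < k by lia.
    rewrite (insub_ord tk) /=; split; first by rewrite ltn_ord.
    rewrite (Xn_val z (idx (Ordinal tk))) ei.
    by rewrite -(Yn_val z (Ordinal tk)).
  + move=> t1 t2 _ h2 h3.
    have t1k : t1 < k by lia.
    rewrite (insub_ord t1k) (insub_ord h3) /=.
    exact: (mi (Ordinal t1k) (Ordinal h3)).
- move=> [f [hf mf]].
  have hlt : forall j : 'I_k, f j < n.
    by move=> j; have := hf j; case=> [|/andP[_ ->] _ //]; rewrite add0n ltn_ord.
  exists (fun j => Ordinal (hlt j)); split.
    move=> j1 j2 /= h; apply: mf => //; rewrite add0n ltn_ord //.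
  move=> j; apply: val_inj => /=.
  have := Xn_val z (Ordinal (hlt j)); rewrite /= => <-.
  rewrite -Yn_val; have := hf j; case=> //; by rewrite add0n ltn_ord.
Qed.

Theorem mainTheorem10 :
  exists C : nat,
    forall (n k m : nat) (own : bipartition n k),
      1 <= k -> k <= n -> 1 <= m -> m < n ->
      D_le own (@SSD n k m) (C * k * trunc_log 2 n).
Proof.
exists 6 => n k m own k1 kn m1 mn.
set L := (trunc_log 2 n).+1.
have nL : n < 2 ^ L by apply: trunc_log_ltn.
have tl : 1 <= trunc_log 2 n by rewrite trunc_log2S //; lia.
exists (@proto n k m own L 0 0 k); split; first exact: valid_proto.
split.
  move=> z; rewrite run_proto // SSD_spec -gr_spec; by [].
apply: leq_trans (@depth_proto n k m own L 0 0 k) _.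
rewrite /L; nia.
Qed.
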